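(* Let $G$ be a finite undirected graph, $\tau\ge1$ an integer, $e=(u,v)\in E(G)$, and let $G'$ be the graph obtained from $G$ by deleting the edge $e$. Let $e'=(u',v')$ be an edge of $G'$ with $u',v'\in\Delta_\tau(e,G)$. If $\mathrm{dis}_G(u,u')=\mathrm{dis}_{G'}(u,u')$, $\mathrm{dis}_G(u,v')=\mathrm{dis}_{G'}(u,v')$, $\mathrm{dis}_G(v,u')=\mathrm{dis}_{G'}(v,u')$ and $\mathrm{dis}_G(v,v')=\mathrm{dis}_{G'}(v,v')$, then $\mathrm{sup}_\tau(e',G)=\mathrm{sup}_\tau(e',G')$.
   Context: Graphs are finite, simple, undirected and unweighted; paths may repeat vertices and their length is the number of edges. $\mathrm{dis}_H(x,y)$ is the length of a shortest path between $x$ and $y$ in $H$ ($\infty$ if none). For vertices $v,u$ of a graph $H$, $u$ is $\tau$-hop reachable from $v$ in $H$ if there is a path between them in $H$ of length at most $\tau$. $N_\tau(v,H)$ is the set of vertices $u\ne v$ that are $\tau$-hop reachable from $v$ in $H$. For an edge $e=(u,v)$ of $H$, $\Delta_\tau(e,H)=N_\tau(u,H)\cap N_\tau(v,H)$ and $\mathrm{sup}_\tau(e,H)=|\Delta_\tau(e,H)|$. *)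

(* Defs.v *)
From mathcomp Require Import all_boot.
From Stdlib Require Import ClassicalDescription.
Set Implicit Arguments. Unset Strict Implicit. Unset Printing Implicit Defensive.

Definition simple_graph (T : finType) (g : rel T) : Prop :=
  symmetric g /\ irreflexive g.

Definition del_edge (T : finType) (g : rel T) (u v : T) : rel T :=
  [rel x y | g x y && ~~ (((x == u) && (y == v)) || ((x == v) && (y == u)))].

Definition walk_len (T : finType) (g : rel T) (n : nat) (x y : T) : bool :=
  [exists p : n.-tuple T, path g x p && (last x p == y)].

Definition hop_reach (T : finType) (g : rel T) (tau : nat) (x y : T) : bool :=
  [exists n : 'I_tau.+1, walk_len g n x y].

(* dis_H(x,y): length of a shortest path; None encodes infinity. *)
Definition dis (T : finType) (g : rel T) (x y : T) : option nat :=
  match excluded_middle_informative (exists n, walk_len g n x y) with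
  | left H => Some (ex_minn H)
  | right _ => None
  end.

Definition Nbhd (T : finType) (g : rel T) (tau : nat) (v : T) : {set T} :=
  [set w | (w != v) && hop_reach g tau v w].

Definition Delta (T : finType) (g : rel T) (tau : nat) (u v : T) : {set T} :=
  Nbhd g tau u :&: Nbhd g tau v.

Definition sup (T : finType) (g : rel T) (tau : nat) (u v : T) : nat :=
  #|Delta g tau u v|.

(* Main.v *)
Require Import Defs.
From mathcomp Require Import all_boot.
From Stdlib Require Import ClassicalDescription.
Set Implicit Arguments.

Lemma walk_lenP (T : finType) (g : rel T) n x y :
  walk_len g n x y <-> exists p : seq T, [/\ size p = n, path g x p & last x p = y].
Proof.
split.
  by case/existsP=> p /andP[Hp /eqP Hl]; exists (tval p); rewrite size_tuple.
case=> p [Hs Hp Hl]; apply/existsP.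
have Hs' : size p == n by apply/eqP.
by exists (Tuple Hs'); rewrite /= Hp Hl eqxx.
Qed.

Lemma walk_rev (T : finType) (g : rel T) n x y :
  symmetric g -> walk_len g n x y -> walk_len g n y x.
Proof.
move=> Hs /walk_lenP [p [Hn Hp Hl]]; apply/walk_lenP.
exists (rev (belast x p)); split.
- by rewrite size_rev size_belast.
- rewrite -Hl rev_path; apply: etrans Hp; apply: eq_path => a b /=; exact: Hs.
- rewrite -Hl; case: p {Hn Hp Hl} => [|z q] //=.
  by rewrite rev_cons last_rcons.
Qed.

Lemma del_sym (T : finType) (g : rel T) u v :
  symmetric g -> symmetric (del_edge g u v).
Proof.
move=> Hs x y; rewrite /del_edge /= Hs.
case: (x == u); case: (x == v); case: (y == u); case: (y == v) => //=; by rewrite !andbF.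
Qed.

Lemma dis_walk (T : finType) (g g' : rel T) k z a :
  walk_len g k z a -> dis g z a = dis g' z a ->
  exists d, d <= k /\ walk_len g' d z a.
Proof.
rewrite /dis => Hw.
case: (excluded_middle_informative (exists n, walk_len g n z a)) => [H|H]; last first.
  by exfalso; apply: H; exists k.
case: (excluded_middle_informative (exists n, walk_len g' n z a)) => [H'|H'] //.
case=> E; exists (ex_minn H'); split.
  rewrite -E; case: ex_minnP => m _ Hm; exact: Hm.
by case: ex_minnP.
Qed.

Lemma walk_cons (T : finType) (g : rel T) m x y a :
  g x y -> walk_len g m y a -> walk_len g m.+1 x a.
Proof.
move=> Hxy /walk_lenP [p [Hn Hp Hl]]; apply/walk_lenP.
by exists (y :: p); rewrite /= Hn Hxy Hp Hl.
Qed.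

Lemma key (T : finType) (g : rel T) u v a :
  (forall z, (z == u) || (z == v) -> dis g z a = dis (del_edge g u v) z a) ->
  forall p x, path g x p -> last x p = a ->
  exists m, m <= size p /\ walk_len (del_edge g u v) m x a.
Proof.
move=> H; elim=> [|y p IH] x /=.
  move=> _ ->; exists 0; split => //; apply/walk_lenP; by exists [::].
case/andP=> Hxy Hp Hl.
case Hd: (del_edge g u v x y).
  have [m [Hm Hw]] := IH y Hp Hl.
  by exists m.+1; split; [|exact: walk_cons Hw].
move: Hd; rewrite /del_edge /= Hxy /= => /negbFE Hxy'.
have Hx : (x == u) || (x == v).
  by case/orP: Hxy' => /andP[-> _]; rewrite ?orbT.
have Hw : walk_len g (size p).+1 x a by apply/walk_lenP; exists (y :: p); rewrite /= Hxy Hp Hl.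
have [d [Hd Hw']] := @dis_walk _ g (del_edge g u v) _ _ _ Hw (H x Hx).
by exists d.
Qed.

Lemma reach_del (T : finType) (g : rel T) tau u v a w :
  symmetric g ->
  (forall z, (z == u) || (z == v) -> dis g z a = dis (del_edge g u v) z a) ->
  hop_reach g tau a w = hop_reach (del_edge g u v) tau a w.
Proof.
move=> Hs H; apply/idP/idP; case/existsP=> n Hn; apply/existsP.
- have /walk_lenP [p [Hsz Hp Hl]] := @walk_rev _ g _ _ _ Hs Hn.
  have [m [Hm Hw]] := @key _ g u v a H p w Hp Hl.
  have Hm' : m < tau.+1 by apply: leq_ltn_trans (ltn_ord n); rewrite -Hsz.
  exists (Ordinal Hm'); exact: @walk_rev _ _ _ _ _ (@del_sym _ g u v Hs) Hw.
- exists n; move/walk_lenP: Hn => [p [Hsz Hp Hl]]; apply/walk_lenP; exists p; split=> //.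
  by apply: sub_path Hp => x y /andP[].
Qed.

Unset Implicit Arguments.
Theorem lemma8 (T : finType) (g : rel T) (tau : nat) (u v u' v' : T) :
  simple_graph g -> 1 <= tau ->
  g u v ->
  del_edge g u v u' v' ->
  u' \in Delta g tau u v -> v' \in Delta g tau u v ->
  dis g u u' = dis (del_edge g u v) u u' ->
  dis g u v' = dis (del_edge g u v) u v' ->
  dis g v u' = dis (del_edge g u v) v u' ->
  dis g v v' = dis (del_edge g u v) v v' ->
  sup g tau u' v' = sup (del_edge g u v) tau u' v'.
Proof.
move=> [Hs _] _ _ _ _ _ H1 H2 H3 H4.
rewrite /sup; congr (fun A : {set T} => #|A|).
apply/setP => w; rewrite /Delta /Nbhd !inE.
rewrite (@reach_del _ g tau u v u' w Hs) ?(@reach_del _ g tau u v v' w Hs) //.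
- by move=> z /orP[] /eqP ->.
- by move=> z /orP[] /eqP ->.
Qed.
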